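(* $$\sum _{n=0}^{\infty } \left( \frac{1}{16} \right)^{n} \binom{2 n}{n}^2 \frac{ H_n^{(2)}}{n + 1} = \frac{32 G}{\pi }+\frac{2 \pi }{3}-16 \ln (2).$$
   Context: $H_n^{(2)} = \sum_{j=1}^n \frac{1}{j^2}$ (with $H_0^{(2)}=0$), and $G = \sum_{n\ge 0}\frac{(-1)^n}{(2n+1)^2}$ is Catalan's constant. *)

(* Defs.v *)
From Stdlib Require Import Reals.
From Coquelicot Require Import Coquelicot.
Open Scope R_scope.

Fixpoint H2 (n : nat) : R :=
  match n with
  | O => 0
  | S m => H2 m + / (INR (S m))^2
  end.

Definition catalan : R := Series (fun n => (-1)^n / (INR (2*n+1))^2).

Definition cbinom (n : nat) : R := Binomial.C (2*n) n.

(* Main.v *)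
Require Import Defs.
From Stdlib Require Import Reals Lra Lia Nsatz ZArith.
From Coquelicot Require Import Coquelicot.
Open Scope R_scope.

Lemma radius_bounded (u : nat -> R) :
  (forall n, Rabs (u n) <= 1) -> forall y, Rabs y < 1 -> Rbar_lt (Rabs y) (CV_radius u).
Proof.
  intros Hu y Hy.
  set (r := (1 + Rabs y)/2).
  assert (Hr : CV_disk u r).
  { unfold CV_disk.
    apply (@ex_series_le R_AbsRing R_CompleteNormedModule _ (fun n => r ^ n)).
    - intros n. simpl. unfold abs; simpl. rewrite Rabs_Rabsolu, Rabs_mult.
      rewrite <- (Rmult_1_l (r ^ n)) at 2. apply Rmult_le_compat; try apply Rabs_pos; auto.
      rewrite <- RPow_abs. right. f_equal. apply Rabs_pos_eq. unfold r. generalize (Rabs_pos y); lra.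
    - apply ex_series_geom. unfold r. rewrite Rabs_pos_eq; generalize (Rabs_pos y); lra. }
  assert (H := Lub_Rbar_correct (CV_disk u)).
  destruct H as [Hub _].
  apply Rbar_lt_le_trans with r.
  - simpl. unfold r; lra.
  - apply Hub. exact Hr.
Qed.


Lemma is_RInt_uniq (f : R -> R) a b l1 l2 : is_RInt f a b l1 -> is_RInt f a b l2 -> l1 = l2.
Proof. intros H1 H2. apply (@is_RInt_unique R_CompleteNormedModule) in H1. apply (@is_RInt_unique R_CompleteNormedModule) in H2. congruence. Qed.

Definition W (m : nat) : R := RInt (fun x => cos x ^ m) 0 (PI/2).
Definition Ws (m : nat) : R := RInt (fun x => sin x ^ m) 0 (PI/2).

Lemma cont_cos_pow m x : continuous (fun x => cos x ^ m) x.
Proof. apply (@ex_derive_continuous R_AbsRing R_NormedModule). auto_derive. auto. Qed.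
Lemma cont_sin_pow m x : continuous (fun x => sin x ^ m) x.
Proof. apply (@ex_derive_continuous R_AbsRing R_NormedModule). auto_derive. auto. Qed.

Lemma W_is m : is_RInt (fun x => cos x ^ m) 0 (PI/2) (W m).
Proof. apply (@RInt_correct R_CompleteNormedModule), (@ex_RInt_continuous R_CompleteNormedModule). intros; apply cont_cos_pow. Qed.
Lemma Ws_is m : is_RInt (fun x => sin x ^ m) 0 (PI/2) (Ws m).
Proof. apply (@RInt_correct R_CompleteNormedModule), (@ex_RInt_continuous R_CompleteNormedModule). intros; apply cont_sin_pow. Qed.

Lemma W_rec m : INR (m+2) * W (m+2) = INR (m+1) * W m.
Proof.
  assert (H1 : is_RInt (fun x => INR (m+2) * cos x ^ (m+2) - INR (m+1) * cos x ^ m) 0 (PI/2) 0).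
  { assert (H0 : is_RInt (fun x => INR (m+2) * cos x ^ (m+2) - INR (m+1) * cos x ^ m) 0 (PI/2) (minus ((fun x => sin x * cos x ^ (m+1)) (PI/2)) ((fun x => sin x * cos x ^ (m+1)) 0))).
  {  apply (@is_RInt_derive R_CompleteNormedModule (fun x => sin x * cos x ^ (m+1))).
    - intros x _. auto_derive; auto.
      replace (m+1)%nat with (S m) by lia. replace (m+2)%nat with (S (S m)) by lia.
      rewrite !S_INR. simpl. replace (pred (S m)) with m by lia.
      assert (Hs : sin x * sin x + cos x * cos x = 1) by (generalize (sin2_cos2 x); unfold Rsqr; lra). nsatz.
    - intros x _. apply (@ex_derive_continuous R_AbsRing R_NormedModule). auto_derive. auto. }
    assert (E0 : (minus ((fun x => sin x * cos x ^ (m+1)) (PI/2)) ((fun x => sin x * cos x ^ (m+1)) 0)) = 0) by (simpl; rewrite cos_PI2, sin_0; replace (m+1)%nat with (S m) by lia; simpl; unfold minus, plus, opp; simpl; ring). cbv beta in H0. rewrite E0 in H0. exact H0. }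
  assert (H2 := is_RInt_minus _ _ _ _ _ _ (is_RInt_scal _ _ _ (INR (m+2)) _ (W_is (m+2)))
                  (is_RInt_scal _ _ _ (INR (m+1)) _ (W_is m))).
  assert (E := is_RInt_uniq _ _ _ _ _ H1 H2). unfold minus, plus, opp, scal in E; simpl in E.
  unfold mult in E; simpl in E. lra.
Qed.

Lemma Ws_rec m : INR (m+2) * Ws (m+2) = INR (m+1) * Ws m.
Proof.
  assert (H1 : is_RInt (fun x => INR (m+2) * sin x ^ (m+2) - INR (m+1) * sin x ^ m) 0 (PI/2) 0).
  { assert (H0 : is_RInt (fun x => INR (m+2) * sin x ^ (m+2) - INR (m+1) * sin x ^ m) 0 (PI/2) (minus ((fun x => - cos x * sin x ^ (m+1)) (PI/2)) ((fun x => - cos x * sin x ^ (m+1)) 0))).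
  {  apply (@is_RInt_derive R_CompleteNormedModule (fun x => - cos x * sin x ^ (m+1))).
    - intros x _. auto_derive; auto.
      replace (m+1)%nat with (S m) by lia. replace (m+2)%nat with (S (S m)) by lia.
      rewrite !S_INR. simpl. replace (pred (S m)) with m by lia.
      assert (Hs : sin x * sin x + cos x * cos x = 1) by (generalize (sin2_cos2 x); unfold Rsqr; lra). nsatz.
    - intros x _. apply (@ex_derive_continuous R_AbsRing R_NormedModule). auto_derive. auto. }
    assert (E0 : (minus ((fun x => - cos x * sin x ^ (m+1)) (PI/2)) ((fun x => - cos x * sin x ^ (m+1)) 0)) = 0) by (simpl; rewrite cos_PI2, sin_0; replace (m+1)%nat with (S m) by lia; simpl; unfold minus, plus, opp; simpl; ring). cbv beta in H0. rewrite E0 in H0. exact H0. }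
  assert (H2 := is_RInt_minus _ _ _ _ _ _ (is_RInt_scal _ _ _ (INR (m+2)) _ (Ws_is (m+2)))
                  (is_RInt_scal _ _ _ (INR (m+1)) _ (Ws_is m))).
  assert (E := is_RInt_uniq _ _ _ _ _ H1 H2). unfold minus, plus, opp, scal in E; simpl in E.
  unfold mult in E; simpl in E. lra.
Qed.


Fixpoint a (n : nat) : R :=
  match n with O => 1 | S k => a k * (2 * INR k + 1) / (2 * INR k + 2) end.

Lemma a_pos n : 0 < a n.
Proof.
  induction n; simpl. lra.
  assert (0 <= INR n) by apply pos_INR.
  apply Rdiv_lt_0_compat; [apply Rmult_lt_0_compat|]; lra.
Qed.

Lemma W0 : W 0 = PI/2.
Proof.
  unfold W. simpl. rewrite RInt_const. unfold scal; simpl; unfold mult; simpl. ring.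
Qed.
Lemma Ws0 : Ws 0 = PI/2.
Proof.
  unfold Ws. simpl. rewrite RInt_const. unfold scal; simpl; unfold mult; simpl. ring.
Qed.

Lemma W1 : W 1 = 1.
Proof.
  assert (H : is_RInt (fun x => cos x ^ 1) 0 (PI/2) (minus (sin (PI/2)) (sin 0))).
  { apply (@is_RInt_derive R_CompleteNormedModule sin).
    - intros x _. auto_derive; auto. ring.
    - intros x _. apply (@ex_derive_continuous R_AbsRing R_NormedModule). auto_derive. auto. }
  rewrite sin_PI2, sin_0 in H. apply (@is_RInt_unique R_CompleteNormedModule) in H. unfold W. rewrite H. unfold minus, plus, opp; simpl. ring.
Qed.
Lemma Ws1 : Ws 1 = 1.
Proof.
  assert (H : is_RInt (fun x => sin x ^ 1) 0 (PI/2) (minus (- cos (PI/2)) (- cos 0))).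
  { apply (@is_RInt_derive R_CompleteNormedModule (fun x => - cos x)).
    - intros x _. auto_derive; auto. ring.
    - intros x _. apply (@ex_derive_continuous R_AbsRing R_NormedModule). auto_derive. auto. }
  rewrite cos_PI2, cos_0 in H. apply (@is_RInt_unique R_CompleteNormedModule) in H. unfold Ws. rewrite H. unfold minus, plus, opp; simpl. ring.
Qed.

Lemma W_even n : W (2*n) = PI/2 * a n.
Proof.
  induction n. simpl. rewrite W0. ring.
  assert (E := W_rec (2*n)). replace (2 * S n)%nat with (2*n+2)%nat by lia.
  assert (E1 : INR (2*n+2) = 2*INR n + 2) by (rewrite plus_INR, mult_INR; simpl; ring).
  assert (E2 : INR (2*n+1) = 2*INR n + 1) by (rewrite plus_INR, mult_INR; simpl; ring).
  rewrite E1, E2, IHn in E. simpl a.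
  assert (0 <= INR n) by apply pos_INR.
  apply (Rmult_eq_reg_l (2 * INR n + 2)). 2: lra. rewrite E. field. lra.
Qed.

Lemma W_odd n : W (2*n+1) = 1 / ((2 * INR n + 1) * a n).
Proof.
  assert (Hp := a_pos n).
  induction n. simpl. replace (2*0+1)%nat with 1%nat by lia. rewrite W1. field.
  assert (E := W_rec (2*n+1)). replace (2 * S n + 1)%nat with (2*n+1+2)%nat by lia.
  assert (Hp' := a_pos n). rewrite IHn in E by exact Hp'.
  assert (E1 : INR (2*n+1+2) = 2*INR n + 3) by (rewrite !plus_INR, mult_INR; simpl; ring).
  assert (E2 : INR (2*n+1+1) = 2*INR n + 2) by (rewrite !plus_INR, mult_INR; simpl; ring).
  rewrite E1, E2 in E.
  assert (0 <= INR n) by apply pos_INR.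
  apply (Rmult_eq_reg_l (2 * INR n + 3)). 2: lra. rewrite E. rewrite S_INR. simpl a. field.
  repeat split; try lra. 
Qed.

Lemma Ws_even n : Ws (2*n) = PI/2 * a n.
Proof.
  induction n. simpl. rewrite Ws0. ring.
  assert (E := Ws_rec (2*n)). replace (2 * S n)%nat with (2*n+2)%nat by lia.
  assert (E1 : INR (2*n+2) = 2*INR n + 2) by (rewrite plus_INR, mult_INR; simpl; ring).
  assert (E2 : INR (2*n+1) = 2*INR n + 1) by (rewrite plus_INR, mult_INR; simpl; ring).
  rewrite E1, E2, IHn in E. simpl a.
  assert (0 <= INR n) by apply pos_INR.
  apply (Rmult_eq_reg_l (2 * INR n + 2)). 2: lra. rewrite E. field. lra.
Qed.

Lemma W_decr m : W (S m) <= W m.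
Proof.
  unfold W. apply RInt_le.
  - generalize PI_RGT_0; lra.
  - apply (@ex_RInt_continuous R_CompleteNormedModule). intros; apply cont_cos_pow.
  - apply (@ex_RInt_continuous R_CompleteNormedModule). intros; apply cont_cos_pow.
  - intros x Hx. simpl.
    assert (0 <= cos x). { apply cos_ge_0; lra. }
    assert (cos x <= 1) by apply COS_bound.
    assert (0 <= cos x ^ m) by (apply pow_le; lra).
    nra.
Qed.


Lemma wallis_low n : 1 / (2 * INR n + 1) <= PI/2 * a n ^ 2.
Proof.
  assert (H := W_decr (2*n)). replace (S (2*n)) with (2*n+1)%nat in H by lia.
  rewrite W_odd, W_even in H. assert (Hp := a_pos n). assert (0 <= INR n) by apply pos_INR.
  apply (Rmult_le_reg_r (/ a n)). apply Rinv_0_lt_compat; lra.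
  replace (1 / (2 * INR n + 1) * / a n) with (1 / ((2 * INR n + 1) * a n)) by (field; lra).
  replace (PI / 2 * a n ^ 2 * / a n) with (PI/2 * a n) by (field; lra). exact H.
Qed.

Lemma wallis_up n : PI/2 * a (S n) ^ 2 <= 1 / (2 * INR (S n)).
Proof.
  assert (H := W_decr (2*n+1)). replace (S (2*n+1)) with (2*(S n))%nat in H by lia.
  rewrite W_odd, W_even in H. assert (Hp := a_pos n). assert (0 <= INR n) by apply pos_INR.
  simpl a in *. rewrite S_INR.
  set (b := a n * (2 * INR n + 1) / (2 * INR n + 2)) in *.
  assert (Hb : 0 < b). { unfold b. apply Rdiv_lt_0_compat; [apply Rmult_lt_0_compat|]; lra. }
  assert (E : (2 * INR n + 1) * a n = (2 * INR n + 2) * b) by (unfold b; field; lra).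
  rewrite E in H.
  apply (Rmult_le_reg_r (/ b)). apply Rinv_0_lt_compat; lra.
  replace (1 / (2 * (INR n + 1)) * / b) with (1 / ((2 * INR n + 2) * b)) by (field; lra).
  replace (PI / 2 * b ^ 2 * / b) with (PI/2 * b) by (field; lra). exact H.
Qed.

Lemma lim_inv_n : is_lim_seq (fun n => / (INR n + 1)) 0.
Proof.
  apply is_lim_seq_spec. intros eps.
  destruct (archimed (/ eps)) as [H1 _].
  assert (He := cond_pos eps).
  exists (Z.to_nat (up (/ eps))). intros n Hn.
  assert (0 <= INR n) by apply pos_INR.
  rewrite Rminus_0_r, Rabs_pos_eq.
  2: { apply Rlt_le, Rinv_0_lt_compat; lra. }
  assert (INR (Z.to_nat (up (/ eps))) <= INR n) by (apply le_INR; lia).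
  rewrite INR_IZR_INZ, Z2Nat.id in H0.
  2: { apply le_IZR. assert (0 < / eps) by (apply Rinv_0_lt_compat; lra). lra. }
  apply (Rmult_lt_reg_l (INR n + 1)). lra. rewrite Rinv_r by lra.
  apply (Rmult_lt_reg_l (/ eps)). apply Rinv_0_lt_compat; lra.
  replace (/ eps * ((INR n + 1) * eps)) with (INR n + 1) by (field; lra). lra.
Qed.

Lemma frac_le a b c d : 0 < b -> 0 < d -> a * d <= c * b -> a / b <= c / d.
Proof.
  intros Hb Hd H. unfold Rdiv. apply Rmult_le_reg_r with (b * d). nra.
  replace (a * / b * (b * d)) with (a * d) by (field; lra).
  replace (c * / d * (b * d)) with (c * b) by (field; lra). exact H.
Qed.

Lemma wallis_lim : is_lim_seq (fun n => INR n * a n ^ 2) (1 / PI).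
Proof.
  assert (HPI := PI_RGT_0).
  apply is_lim_seq_le_le with (fun n => 1/PI * (1 - / (INR n + 1))) (fun _ => 1 / PI).
  - intros [|n].
    + simpl. assert (0 < 1/PI) by (apply Rdiv_lt_0_compat; lra). split; [ | lra]. right; field. lra.
    + assert (H1 := wallis_low (S n)). assert (H2 := wallis_up n).
      rewrite S_INR in *. assert (0 <= INR n) by apply pos_INR.
      set (q := a (S n) ^ 2) in *.
      split.
      * assert (Hq : 2/(PI*(2*(INR n+1)+1)) <= q).
        { apply Rmult_le_reg_l with (PI/2); [lra|].
          replace (PI/2 * (2/(PI*(2*(INR n+1)+1)))) with (1/(2*(INR n+1)+1)) by (field; lra). lra. }
        apply Rle_trans with ((INR n + 1) * (2/(PI*(2*(INR n+1)+1)))).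
        2: apply Rmult_le_compat_l; lra.
        replace (1 / PI * (1 - / (INR n + 1 + 1))) with ((INR n + 1)/(INR n + 2) * (1/PI)) by (field; lra).
        replace ((INR n + 1) * (2/(PI*(2*(INR n+1)+1)))) with ((2*INR n + 2)/(2*INR n + 3) * (1/PI)) by (field; lra).
        apply Rmult_le_compat_r. left; apply Rdiv_lt_0_compat; lra.
        apply frac_le; nra.
      * apply Rmult_le_reg_l with (PI/2). lra.
        replace (PI/2 * ((INR n + 1) * q)) with ((INR n + 1) * (PI/2 * q)) by ring.
        apply Rle_trans with ((INR n + 1) * (1 / (2 * (INR n + 1)))).
        apply Rmult_le_compat_l; lra. right; field; lra.
  - assert (H := is_lim_seq_mult' _ _ _ _ (is_lim_seq_const (1/PI))
       (is_lim_seq_minus' _ _ _ _ (is_lim_seq_const 1) lim_inv_n)).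
    rewrite Rminus_0_r, Rmult_1_r in H. exact H.
  - apply is_lim_seq_const.
Qed.


Lemma xcos_le_sin x : 0 <= x <= PI/2 -> x * cos x <= sin x.
Proof.
  intros Hx.
  destruct (Req_dec x 0) as [->|Hx0]. rewrite sin_0; lra.
  destruct (MVT_gen (fun t => sin t - t * cos t) 0 x (fun t => t * sin t)) as [c [Hc Hd]].
  - intros t _. auto_derive; auto. ring.
  - intros t _. reg.
  - rewrite Rmin_left, Rmax_right in Hc by lra.
    assert (0 <= sin c) by (apply sin_ge_0; generalize PI_RGT_0; lra).
    rewrite sin_0 in Hd. assert (0 <= c * sin c * (x - 0)) by (apply Rmult_le_pos; nra).
    lra.
Qed.

Definition JJ (n : nat) : R := RInt (fun x => x ^ 2 * cos x ^ (2 * n)) 0 (PI/2).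

Lemma JJ_is n : is_RInt (fun x => x ^ 2 * cos x ^ (2 * n)) 0 (PI/2) (JJ n).
Proof. apply (@RInt_correct R_CompleteNormedModule), (@ex_RInt_continuous R_CompleteNormedModule).
  intros; apply (@ex_derive_continuous R_AbsRing R_NormedModule). auto_derive. auto. Qed.

Ltac sc_fix K x :=
  let Hs := fresh in
  assert (Hs : sin x * sin x = 1 - cos x * cos x) by (generalize (sin2_cos2 x); unfold Rsqr; lra);
  apply Rminus_diag_uniq;
  match goal with |- ?L - ?R = 0 => replace (L - R) with (K * (sin x * sin x - (1 - cos x * cos x))) by (field; auto) end;
  rewrite Hs; ring.

Lemma Phi_deriv m x : is_derive (fun x => x * cos x ^ (S (S m)) + (INR m + 2)/2 * x ^ 2 * sin x * cos x ^ (S m)) x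
   (cos x ^ (S (S m)) + (INR m + 2)^2/2 * (x^2 * cos x ^ (S (S m))) - (INR m + 1) * (INR m + 2)/2 * (x^2 * cos x ^ m)).
Proof.
  auto_derive; auto. simpl. change (match m with 0%nat => 1 | S _ => INR m + 1 end) with (INR (S m)). rewrite S_INR.
  sc_fix (-(INR m + 2)*(INR m + 1)/2 * x^2 * cos x ^ m) x.
Qed.

Lemma JJ_rec k : W (2 * S k) = (2 * INR k + 1) * (INR k + 1) * JJ k - 2 * (INR k + 1)^2 * JJ (S k).
Proof.
  set (m := (2 * k)%nat).
  set (Phi := fun x => x * cos x ^ (S (S m)) + (INR m + 2)/2 * x ^ 2 * sin x * cos x ^ (S m)).
  assert (H0 : is_RInt (fun x => cos x ^ (S (S m)) + (INR m + 2)^2/2 * (x^2 * cos x ^ (S (S m))) - (INR m + 1) * (INR m + 2)/2 * (x^2 * cos x ^ m)) 0 (PI/2)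
                (minus (Phi (PI/2)) (Phi 0))).
  { apply (@is_RInt_derive R_CompleteNormedModule Phi).
    - intros x _. apply Phi_deriv.
    - intros x _. apply (@ex_derive_continuous R_AbsRing R_NormedModule). auto_derive. auto. }
  assert (E0 : minus (Phi (PI/2)) (Phi 0) = 0).
  { unfold Phi. rewrite cos_PI2. simpl. unfold minus, plus, opp; simpl. ring. }
  rewrite E0 in H0.
  assert (HW := W_is (2 * S k)). assert (HJ := JJ_is (S k)).
  replace (2 * S k)%nat with (S (S m)) in HW, HJ by (unfold m; lia).
  assert (H2 := is_RInt_minus _ _ _ _ _ _
     (is_RInt_plus _ _ _ _ _ _ HW (is_RInt_scal _ _ _ ((INR m + 2)^2/2) _ HJ))
     (is_RInt_scal _ _ _ ((INR m + 1) * (INR m + 2)/2) _ (JJ_is k))).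
  assert (E := is_RInt_uniq _ _ _ _ _ H0 H2). unfold minus, plus, opp, scal in E; simpl in E.
  unfold mult in E; simpl in E.
  assert (Em : INR m = 2 * INR k) by (unfold m; rewrite mult_INR; simpl; ring).
  rewrite Em in E. replace (2 * S k)%nat with (S (S m)) by (unfold m; lia).
  match type of E with 0 = ?r => assert (E' : r = 0) by (symmetry; exact E) end.
  lra.
Qed.

Lemma JJ0 : JJ 0 = PI ^ 3 / 24.
Proof.
  assert (H : is_RInt (fun x => x ^ 2 * cos x ^ (2 * 0)) 0 (PI/2) (minus ((PI/2)^3/3) (0^3/3))).
  { apply (@is_RInt_derive R_CompleteNormedModule (fun x => x^3/3)).
    - intros x _. auto_derive; auto. simpl. field.
    - intros x _. apply (@ex_derive_continuous R_AbsRing R_NormedModule). auto_derive. auto. }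
  apply (@is_RInt_unique R_CompleteNormedModule) in H. unfold JJ. rewrite H.
  unfold minus, plus, opp; simpl. field.
Qed.

Lemma JJ_nonneg n : 0 <= JJ n.
Proof.
  assert (H := JJ_is n).
  apply (is_RInt_le (fun _ => 0) (fun x => x ^ 2 * cos x ^ (2 * n)) 0 (PI/2) 0 (JJ n)).
  - generalize PI_RGT_0; lra.
  - assert (H1 := @is_RInt_const R_NormedModule 0 (PI/2) 0). unfold scal in H1; simpl in H1.
    unfold mult in H1; simpl in H1. rewrite Rmult_0_r in H1. exact H1.
  - exact H.
  - intros x Hx. apply Rmult_le_pos. apply pow2_ge_0.
    rewrite pow_mult. apply pow_le. apply pow2_ge_0.
Qed.

Lemma JJ_bound k : JJ (S k) <= W (2 * k) - W (2 * S k).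
Proof.
  assert (H2 := is_RInt_minus _ _ _ _ _ _ (W_is (2 * k)) (W_is (2 * S k))).
  refine (is_RInt_le _ _ 0 (PI/2) _ _ _ (JJ_is (S k)) H2 _).
  generalize PI_RGT_0; lra.
  intros x Hx.
  change (x ^ 2 * cos x ^ (2 * S k) <= cos x ^ (2 * k) + - cos x ^ (2 * S k)).
  assert (Hc : 0 <= cos x) by (apply cos_ge_0; lra).
  assert (Hxc := xcos_le_sin x ltac:(lra)).
  assert (Hs : sin x * sin x + cos x * cos x = 1) by (generalize (sin2_cos2 x); unfold Rsqr; lra).
  replace (2 * S k)%nat with (S (S (2 * k))) by lia.
  change (cos x ^ S (S (2*k))) with (cos x * (cos x * cos x ^ (2*k))).
  set (P := cos x ^ (2 * k)).
  assert (0 <= P) by (apply pow_le; lra).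
  assert (Hxc0 : 0 <= x * cos x) by (apply Rmult_le_pos; lra).
  assert (H3 : x * x * (cos x * cos x) <= sin x * sin x) by nra.
  assert (H4 : x * x * (cos x * cos x) * P <= sin x * sin x * P)
    by (apply Rmult_le_compat_r; lra).
  replace (x ^ 2) with (x * x) by ring.
  nra.
Qed.


Lemma H2_formula n : H2 n = PI^2/6 - 2 * (JJ n / W (2*n)).
Proof.
  assert (HPI := PI_RGT_0).
  induction n.
  - simpl H2. rewrite JJ0. replace (2*0)%nat with 0%nat by lia. rewrite W0. field. lra.
  - simpl H2. rewrite IHn. clear IHn.
    assert (E := JJ_rec n). rewrite !W_even in *.
    assert (Hp := a_pos n). assert (0 <= INR n) by apply pos_INR.
    simpl a in *. change (match n with 0%nat => 1 | S _ => INR n + 1 end) with (INR (S n)). rewrite S_INR.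
    assert (EJ : JJ (S n) = ((2 * INR n + 1) * (INR n + 1) * JJ n - PI / 2 * (a n * (2 * INR n + 1) / (2 * INR n + 2))) / (2 * (INR n + 1) ^ 2)).
    { rewrite E. field. lra. }
    rewrite EJ. field. repeat split; try lra.
Qed.

Lemma D_bound k : 0 <= JJ (S k) / W (2 * S k) <= 1 / (2 * INR k + 1).
Proof.
  assert (HPI := PI_RGT_0).
  assert (Hp := a_pos k). assert (0 <= INR k) by apply pos_INR.
  assert (HB := JJ_bound k). assert (HN := JJ_nonneg (S k)).
  rewrite !W_even in *. simpl a in *.
  set (q := a k * (2 * INR k + 1) / (2 * INR k + 2)) in *.
  assert (Hq : 0 < q) by (unfold q; apply Rdiv_lt_0_compat; [apply Rmult_lt_0_compat|]; lra).
  split.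
  - apply Rdiv_le_0_compat; [lra|]. apply Rmult_lt_0_compat; lra.
  - apply Rmult_le_reg_r with (PI/2*q). apply Rmult_lt_0_compat; lra.
    replace (JJ (S k) / (PI / 2 * q) * (PI / 2 * q)) with (JJ (S k)) by (field; lra).
    apply Rle_trans with (PI / 2 * a k - PI / 2 * q). exact HB.
    right. unfold q. field. lra.
Qed.

Lemma H2_bounds n : PI^2/6 - 4 / (INR n + 1) <= H2 n <= PI^2/6.
Proof.
  assert (HPI := PI_RGT_0). assert (HP4 := PI_4).
  destruct n.
  - simpl. split; nra.
  - rewrite H2_formula. destruct (D_bound n) as [H1 H2]. rewrite S_INR.
    assert (0 <= INR n) by apply pos_INR.
    split; [|lra].
    assert (1 / (2 * INR n + 1) <= 2 / (INR n + 1 + 1)).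
    { apply frac_le; lra. }
    lra.
Qed.

Lemma H2_lim : is_lim_seq H2 (PI^2/6).
Proof.
  apply is_lim_seq_le_le with (fun n => PI^2/6 - 4 * / (INR n + 1)) (fun _ => PI^2/6).
  - intros n. destruct (H2_bounds n). split; [|lra]. unfold Rdiv at 2 in H. lra.
  - assert (H := is_lim_seq_minus' _ _ _ _ (is_lim_seq_const (PI^2/6))
       (is_lim_seq_mult' _ _ _ _ (is_lim_seq_const 4) lim_inv_n)).
    rewrite Rmult_0_r, Rminus_0_r in H. exact H.
  - apply is_lim_seq_const.
Qed.

Lemma T_lim : is_lim_seq (fun n => INR n * a n ^ 2 * H2 n) (PI/6).
Proof.
  assert (H := is_lim_seq_mult' _ _ _ _ wallis_lim H2_lim).
  replace (PI/6) with (1 / PI * (PI ^ 2 / 6)) by (field; generalize PI_RGT_0; lra).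
  exact H.
Qed.


Ltac fixINR := repeat match goal with |- context [match ?n with 0%nat => 1 | S _ => INR ?n + 1 end] =>
  change (match n with 0%nat => 1 | S _ => INR n + 1 end) with (INR (S n)) end.

Lemma mono_deriv (f df : R -> R) a b : a <= b ->
  (forall x, a <= x <= b -> is_derive f x (df x)) ->
  (forall x, a <= x <= b -> 0 <= df x) -> f a <= f b.
Proof.
  intros Hab Hd Hp.
  destruct (MVT_gen f a b df) as [c [Hc E]].
  - intros x Hx. rewrite Rmin_left, Rmax_right in Hx by lra. apply Hd; lra.
  - intros x Hx. rewrite Rmin_left, Rmax_right in Hx by lra.
    apply continuity_pt_filterlim. apply (@ex_derive_continuous R_AbsRing R_NormedModule).
    exists (df x). apply Hd; lra.
  - rewrite Rmin_left, Rmax_right in Hc by lra.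
    assert (0 <= df c * (b - a)) by (apply Rmult_le_pos; [apply Hp; lra | lra]). lra.
Qed.

Lemma sin_nPI m : sin (INR m * PI) = 0.
Proof.
  induction m. simpl. rewrite Rmult_0_l. apply sin_0.
  rewrite S_INR, Rmult_plus_distr_r, Rmult_1_l, sin_plus, IHm, sin_PI. ring.
Qed.
Lemma cos_nPI m : cos (INR m * PI) = (-1) ^ m.
Proof.
  induction m. simpl. rewrite Rmult_0_l. apply cos_0.
  rewrite S_INR, Rmult_plus_distr_r, Rmult_1_l, cos_plus, IHm, sin_PI, cos_PI. simpl. ring.
Qed.

Fixpoint fs (N : nat) (s w : R) : R :=
  match N with
  | O => 0
  | S n => fs n s w + 2 * (-1) ^ n * s ^ (S n) * cos (INR (S n) * w) / INR (S n)
  end.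
Fixpoint fsd (N : nat) (s w : R) : R :=
  match N with
  | O => 0
  | S n => fsd n s w + 2 * (-1) ^ n * s ^ n * cos (INR (S n) * w)
  end.

Lemma fs_deriv N s w : is_derive (fun s => fs N s w) s (fsd N s w).
Proof.
  induction N; simpl.
  - apply (@is_derive_const R_AbsRing R_NormedModule).
  - apply (@is_derive_plus R_AbsRing R_NormedModule (fun s => fs N s w)
      (fun s => 2 * (-1) ^ N * s ^ (S N) * cos (INR (S N) * w) / INR (S N))).
    exact IHN.
    auto_derive. exact I.
    change (match N with 0%nat => 1 | S _ => INR N + 1 end) with (INR (S N)).
    simpl pred. field. apply not_0_INR. lia.
Qed.

Lemma cos_rec k w : 2 * cos w * cos (INR (S k) * w) = cos (INR (S (S k)) * w) + cos (INR k * w).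
Proof.
  replace (INR (S (S k)) * w) with (INR (S k) * w + w) by (rewrite !S_INR; ring).
  replace (INR k * w) with (INR (S k) * w - w) by (rewrite !S_INR; ring).
  rewrite cos_plus, cos_minus. ring.
Qed.

Lemma fsd_id N s w : (1 + 2 * s * cos w + s ^ 2) * fsd N s w
   = 2 * (cos w + s) - 2 * (-1) ^ N * s ^ N * (cos (INR (S N) * w) + s * cos (INR N * w)).
Proof.
  induction N.
  - simpl. replace (1 * w) with w by ring. replace (0 * w) with 0 by ring. rewrite cos_0. ring.
  - simpl fsd. change (match N with 0%nat => 1 | S _ => INR N + 1 end) with (INR (S N)). rewrite Rmult_plus_distr_l, IHN.
    assert (Hc := cos_rec N w).
    assert (Hc' : cos (INR (S (S N)) * w) = 2 * cos w * cos (INR (S N) * w) - cos (INR N * w)) by lra.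
    rewrite Hc'. change ((-1)^(S N)) with (-1 * (-1)^N). change (s^(S N)) with (s * s^N). ring.
Qed.

Lemma fs_S n s w : fs (S n) s w = fs n s w + 2 * (-1) ^ n * s ^ (S n) * cos (INR (S n) * w) / INR (S n).
Proof. reflexivity. Qed.

Lemma fs_0 N w : fs N 0 w = 0.
Proof. induction N. reflexivity. rewrite fs_S, IHN, pow_i by lia. field. apply not_0_INR. lia. Qed.

Lemma fs_bound N w : 0 <= cos w -> Rabs (ln (2 + 2 * cos w) - fs N 1 w) <= 4 / INR (S N).
Proof.
  intros Hc.
  set (den := fun s => 1 + 2 * s * cos w + s ^ 2).
  set (g := fun s => ln (den s) - fs N s w).
  set (gd := fun s => (2 * cos w + 2 * s) / den s - fsd N s w).
  assert (Hden : forall s, 0 <= s -> 1 <= den s).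
  { intros s Hs. unfold den. assert (0 <= s * cos w) by (apply Rmult_le_pos; lra). nra. }
  assert (Hg : forall s, 0 <= s -> is_derive g s (gd s)).
  { intros s Hs. unfold g, gd.
    apply (@is_derive_minus R_AbsRing R_NormedModule (fun s => ln (den s)) (fun s => fs N s w)).
    - unfold den. auto_derive. specialize (Hden s Hs). unfold den in Hden. lra.
      field. specialize (Hden s Hs). unfold den in Hden. lra.
    - apply fs_deriv. }
  assert (Hgd : forall s, 0 <= s <= 1 -> Rabs (gd s) <= 4 * s ^ N).
  { intros s Hs. unfold gd.
    assert (Hd := Hden s ltac:(lra)).
    assert (E : fsd N s w = (2 * (cos w + s) - 2 * (-1) ^ N * s ^ N * (cos (INR (S N) * w) + s * cos (INR N * w))) / den s).
    { rewrite <- fsd_id. unfold den. field. unfold den in Hd; lra. }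
    rewrite E.
    replace ((2 * cos w + 2 * s) / den s - (2 * (cos w + s) - 2 * (-1) ^ N * s ^ N * (cos (INR (S N) * w) + s * cos (INR N * w))) / den s)
      with ((2 * s ^ N) * ((-1) ^ N * (cos (INR (S N) * w) + s * cos (INR N * w))) / den s) by (field; lra).
    assert (Hsn : 0 <= s ^ N) by (apply pow_le; lra).
    assert (Hb : Rabs ((-1) ^ N * (cos (INR (S N) * w) + s * cos (INR N * w))) <= 2).
    { rewrite Rabs_mult, pow_1_abs, Rmult_1_l.
      apply Rle_trans with (Rabs (cos (INR (S N) * w)) + Rabs (s * cos (INR N * w))). apply Rabs_triang.
      rewrite Rabs_mult, (Rabs_pos_eq s) by lra.
      assert (Rabs (cos (INR (S N) * w)) <= 1) by apply Rabs_le, COS_bound.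
      assert (Rabs (cos (INR N * w)) <= 1) by apply Rabs_le, COS_bound.
      assert (Rabs (cos (INR N * w)) >= 0) by (apply Rle_ge, Rabs_pos). nra. }
    unfold Rdiv. rewrite Rabs_mult, Rabs_mult, (Rabs_pos_eq (2 * s ^ N)) by lra.
    rewrite (Rabs_pos_eq (/ den s)) by (apply Rlt_le, Rinv_0_lt_compat; lra).
    assert (Hi : / den s <= 1). { rewrite <- Rinv_1. apply Rinv_le_contravar; lra. }
    assert (Hi0 : 0 < / den s) by (apply Rinv_0_lt_compat; lra).
    assert (0 <= Rabs ((-1) ^ N * (cos (INR (S N) * w) + s * cos (INR N * w)))) by apply Rabs_pos.
    apply Rle_trans with (2 * s ^ N * 2 * 1).
    apply Rmult_le_compat; try nra. lra. }
  assert (HN : 0 < INR (S N)) by (apply lt_0_INR; lia).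
  assert (Hup := mono_deriv (fun s => 4 * s ^ (S N) / INR (S N) - g s) (fun s => 4 * s ^ N - gd s) 0 1 ltac:(lra)).
  assert (Hlo := mono_deriv (fun s => 4 * s ^ (S N) / INR (S N) + g s) (fun s => 4 * s ^ N + gd s) 0 1 ltac:(lra)).
  assert (Hpow : forall s, is_derive (fun s => 4 * s ^ (S N) / INR (S N)) s (4 * s ^ N)).
  { intros s. auto_derive. lra. change (match N with 0%nat => 1 | S _ => INR N + 1 end) with (INR (S N)).
    simpl pred. field. lra. }
  assert (A1 : 4 * 0 ^ (S N) / INR (S N) - g 0 <= 4 * 1 ^ (S N) / INR (S N) - g 1).
  { apply Hup.
    - intros x Hx. apply (@is_derive_minus R_AbsRing R_NormedModule (fun s => 4 * s ^ (S N) / INR (S N)) g).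
      apply Hpow. apply Hg; lra.
    - intros x Hx. assert (H := Hgd x Hx). apply Rabs_le_between in H. lra. }
  assert (A2 : 4 * 0 ^ (S N) / INR (S N) + g 0 <= 4 * 1 ^ (S N) / INR (S N) + g 1).
  { apply Hlo.
    - intros x Hx. apply (@is_derive_plus R_AbsRing R_NormedModule (fun s => 4 * s ^ (S N) / INR (S N)) g).
      apply Hpow. apply Hg; lra.
    - intros x Hx. assert (H := Hgd x Hx). apply Rabs_le_between in H. lra. }
  assert (G0 : g 0 = 0). { unfold g, den. rewrite fs_0. replace (1 + 2 * 0 * cos w + 0 ^ 2) with 1 by ring. rewrite ln_1. ring. }
  assert (G1 : g 1 = ln (2 + 2 * cos w) - fs N 1 w).
  { unfold g, den. f_equal. f_equal. ring. }
  rewrite G0, <- G1, pow1 in *. rewrite pow_i in A1, A2 by lia.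
  apply Rabs_le. split; lra.
Qed.

Fixpoint sig (N : nat) : R :=
  match N with
  | O => 0
  | S n => sig n + 2 * (-1) ^ n * sin (INR (S n) * (PI/2)) / (INR (S n)) ^ 2
  end.

Lemma fs_int N : is_RInt (fun w => fs N 1 w) 0 (PI/2) (sig N).
Proof.
  induction N.
  - simpl. assert (H := @is_RInt_const R_NormedModule 0 (PI/2) 0).
    unfold scal in H; simpl in H; unfold mult in H; simpl in H. rewrite Rmult_0_r in H. exact H.
  - assert (HN : 0 < INR (S N)) by (apply lt_0_INR; lia).
    assert (Ht : is_RInt (fun w => 2 * (-1) ^ N * 1 ^ (S N) * cos (INR (S N) * w) / INR (S N)) 0 (PI/2)
               (minus ((fun w => 2 * (-1) ^ N * sin (INR (S N) * w) / (INR (S N)) ^ 2) (PI/2))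
                      ((fun w => 2 * (-1) ^ N * sin (INR (S N) * w) / (INR (S N)) ^ 2) 0))).
    { apply (@is_RInt_derive R_CompleteNormedModule (fun w => 2 * (-1) ^ N * sin (INR (S N) * w) / (INR (S N)) ^ 2)).
      - intros x _. auto_derive. lra. rewrite pow1. fixINR. field. lra.
      - intros x _. apply (@ex_derive_continuous R_AbsRing R_NormedModule). auto_derive. lra. }
    cbv beta in Ht. rewrite Rmult_0_r, sin_0 in Ht.
    assert (H := is_RInt_plus _ _ _ _ _ _ IHN Ht).
    replace (sig (S N)) with (plus (sig N) (minus (2 * (-1) ^ N * sin (INR (S N) * (PI / 2)) / INR (S N) ^ 2)
         (2 * (-1) ^ N * 0 / INR (S N) ^ 2))).
    2: { unfold minus; unfold plus, opp; simpl. change (match N with 0%nat => 1 | S _ => INR N + 1 end) with (INR (S N)). field. lra. }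
    apply (is_RInt_ext _ _ _ _ _ (fun x _ => eq_sym (fs_S N 1 x))) in H.
    exact H.
Qed.

Lemma sum_n_SR (u : nat -> R) n : sum_n u (S n) = sum_n u n + u (S n).
Proof. rewrite sum_Sn. reflexivity. Qed.

Definition catt (n : nat) : R := (-1) ^ n / (INR (2 * n + 1)) ^ 2.

Lemma sig_odd M : sig (2 * M + 1) = 2 * sum_n catt M.
Proof.
  induction M.
  - simpl. unfold catt. rewrite sum_O. simpl. rewrite Rmult_1_l, sin_PI2. field.
  - replace (2 * S M + 1)%nat with (S (S (2 * M + 1))) by lia.
    change (sig (S (S (2 * M + 1)))) with
      (sig (2 * M + 1) + 2 * (-1) ^ (2 * M + 1) * sin (INR (S (2 * M + 1)) * (PI/2)) / (INR (S (2 * M + 1))) ^ 2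
        + 2 * (-1) ^ (S (2 * M + 1)) * sin (INR (S (S (2 * M + 1))) * (PI/2)) / (INR (S (S (2 * M + 1)))) ^ 2).
    rewrite IHM, sum_n_SR.
    replace (INR (S (2 * M + 1)) * (PI / 2)) with (INR (S M) * PI) by (rewrite !S_INR, plus_INR, mult_INR; simpl; field).
    rewrite sin_nPI.
    replace (INR (S (S (2 * M + 1))) * (PI / 2)) with (INR (S M) * PI + PI/2) by (rewrite !S_INR, plus_INR, mult_INR; simpl; field).
    rewrite sin_plus, sin_nPI, cos_nPI, cos_PI2, sin_PI2.
    replace (S (2 * M + 1)) with (2 * S M)%nat by lia. rewrite pow_1_even.
    unfold catt. assert (0 <= INR M) by apply pos_INR.
    rewrite ?S_INR, ?plus_INR, ?mult_INR, ?S_INR, ?plus_INR, ?mult_INR. simpl INR.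
    field. lra.
Qed.

Definition Vc : R := RInt (fun w => ln (2 + 2 * cos w)) 0 (PI/2).

Lemma lncos_ex : ex_RInt (fun w => ln (2 + 2 * cos w)) 0 (PI/2).
Proof.
  apply (@ex_RInt_continuous R_CompleteNormedModule). intros z Hz.
  rewrite Rmin_left, Rmax_right in Hz by (generalize PI_RGT_0; lra).
  assert (0 <= cos z) by (apply cos_ge_0; lra).
  apply (@ex_derive_continuous R_AbsRing R_NormedModule). auto_derive. lra.
Qed.

Lemma V_approx N : Rabs (Vc - sig N) <= PI/2 * (4 / INR (S N)).
Proof.
  assert (HPI := PI_RGT_0).
  assert (H := is_RInt_minus _ _ _ _ _ _ (@RInt_correct R_CompleteNormedModule _ _ _ lncos_ex) (fs_int N)).
  assert (E := @is_RInt_unique R_CompleteNormedModule _ _ _ _ H).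
  assert (Hex : ex_RInt (fun y => minus (ln (2 + 2 * cos y)) (fs N 1 y)) 0 (PI/2)) by (eexists; exact H).
  assert (B := abs_RInt_le_const _ 0 (PI/2) (4 / INR (S N)) ltac:(lra) Hex).
  assert (E' : RInt (fun y => minus (ln (2 + 2 * cos y)) (fs N 1 y)) 0 (PI/2) = Vc - sig N) by exact E.
  rewrite E' in B.
  replace (PI/2 * (4 / INR (S N))) with ((PI/2 - 0) * (4 / INR (S N))) by ring.
  apply B. intros t Ht. apply fs_bound. apply cos_ge_0; lra.
Qed.

Lemma catalan_val : catalan = Vc / 2.
Proof.
  assert (HPI := PI_RGT_0).
  unfold catalan. apply is_series_unique.
  change (fun n : nat => (-1) ^ n / INR (2 * n + 1) ^ 2) with catt.
  change (is_lim_seq (sum_n catt) (Vc/2)).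
  apply is_lim_seq_le_le with (fun M => Vc/2 - PI * / (INR M + 1)) (fun M => Vc/2 + PI * / (INR M + 1)).
  - intros M. assert (H := V_approx (2 * M + 1)). rewrite sig_odd in H.
    assert (0 <= INR M) by apply pos_INR.
    assert (Hb : PI / 2 * (4 / INR (S (2 * M + 1))) = PI * / (INR M + 1)).
    { rewrite S_INR, plus_INR, mult_INR. simpl INR. field. lra. }
    assert (0 <= PI * / (INR M + 1)) by (apply Rmult_le_pos; [lra| apply Rlt_le, Rinv_0_lt_compat; lra]).
    rewrite Hb in H. apply Rabs_le_between in H. lra.
  - assert (H := is_lim_seq_minus' _ _ _ _ (is_lim_seq_const (Vc/2))
       (is_lim_seq_mult' _ _ _ _ (is_lim_seq_const PI) lim_inv_n)).
    rewrite Rmult_0_r, Rminus_0_r in H. exact H.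
  - assert (H := is_lim_seq_plus' _ _ _ _ (is_lim_seq_const (Vc/2))
       (is_lim_seq_mult' _ _ _ _ (is_lim_seq_const PI) lim_inv_n)).
    rewrite Rmult_0_r, Rplus_0_r in H. exact H.
Qed.


Lemma sum_n_SR' (u : nat -> R) n : sum_n u (S n) = sum_n u n + u (S n).
Proof. rewrite sum_Sn. reflexivity. Qed.

Lemma a_S n : a (S n) = a n * (2 * INR n + 1) / (2 * INR n + 2).
Proof. reflexivity. Qed.

Lemma a_decr n : a (S n) <= a n.
Proof.
  rewrite a_S. assert (Hp := a_pos n). assert (0 <= INR n) by apply pos_INR.
  apply Rmult_le_reg_r with (2 * INR n + 2). lra.
  replace (a n * (2 * INR n + 1) / (2 * INR n + 2) * (2 * INR n + 2)) with (a n * (2 * INR n + 1)) by (field; lra).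
  nra.
Qed.

Lemma a_le1 n : a n <= 1.
Proof. induction n. simpl; lra. generalize (a_decr n); lra. Qed.

Lemma a_abs n : Rabs (a n) <= 1.
Proof. rewrite Rabs_pos_eq. apply a_le1. apply Rlt_le, a_pos. Qed.

Lemma ps_lim c y : Rbar_lt (Rabs y) (CV_radius c) ->
  is_lim_seq (sum_n (fun k => c k * y ^ k)) (PSeries c y).
Proof.
  intros H. apply CV_radius_inside, ex_pseries_R, Series_correct in H. exact H.
Qed.

Lemma ps_ex c y : Rbar_lt (Rabs y) (CV_radius c) -> ex_series (fun k => c k * y ^ k).
Proof. intros H. apply CV_radius_inside, ex_pseries_R in H. exact H. Qed.

Lemma rad_a y : Rabs y < 1 -> Rbar_lt (Rabs y) (CV_radius a).
Proof. apply radius_bounded, a_abs. Qed.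

Lemma A_partial y N :
  2 * (1 - y) * sum_n (fun k => PS_derive a k * y ^ k) N
  = sum_n (fun k => a k * y ^ k) N - 2 * (PS_derive a N * y ^ N) * y.
Proof.
  unfold PS_derive.
  induction N.
  - rewrite !sum_O. simpl. field.
  - rewrite !sum_n_SR'. rewrite Rmult_plus_distr_l, IHN.
    rewrite (a_S (S N)). rewrite (S_INR (S N)). assert (0 < INR (S N)) by (apply lt_0_INR; lia). set (t := INR (S N)) in *. change (y ^ S N) with (y * y ^ N). field. lra.
Qed.

Lemma A_id y : Rabs y < 1 -> 2 * (1 - y) * PSeries (PS_derive a) y = PSeries a y.
Proof.
  intros Hy.
  assert (Ha := rad_a y Hy).
  assert (Hd : Rbar_lt (Rabs y) (CV_radius (PS_derive a))) by (rewrite CV_radius_derive; exact Ha).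
  assert (L1 := ps_lim _ _ Hd). assert (L2 := ps_lim _ _ Ha).
  assert (L0 := ex_series_lim_0 _ (ps_ex _ _ Hd)).
  assert (L3 := is_lim_seq_scal_l _ (2 * (1 - y)) _ L1).
  assert (L4 := is_lim_seq_minus' _ _ _ _ L2 (is_lim_seq_mult' _ _ _ _ (is_lim_seq_scal_l _ 2 _ L0) (is_lim_seq_const y))).
  simpl in L3, L4.
  replace (PSeries a y) with (PSeries a y - 2 * 0 * y) by ring.
  apply is_lim_seq_unique in L3. apply is_lim_seq_unique in L4.
  assert (E : Lim_seq (fun n => 2 * (1 - y) * sum_n (fun k => PS_derive a k * y ^ k) n) =
              Lim_seq (fun n => sum_n (fun k => a k * y ^ k) n - 2 * (PS_derive a n * y ^ n) * y)).
  { apply Lim_seq_ext. intros n. apply A_partial. }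
  rewrite L3, L4 in E. injection E. auto.
Qed.

Lemma A_closed y : Rabs y < 1 -> PSeries a y * sqrt (1 - y) = 1.
Proof.
  set (h := fun y => PSeries a y * sqrt (1 - y)).
  assert (Hd : forall t, Rabs t < 1 -> is_derive h t zero).
  { intros t Ht.
    assert (Hs : is_derive (fun t => sqrt (1 - t)) t (- / (2 * sqrt (1 - t)))).
    { apply Rabs_def2 in Ht. auto_derive. lra. match goal with |- ?a = ?b => change (@eq R a b) end. unfold Rminus. field. apply Rgt_not_eq, sqrt_lt_R0. lra. }
    assert (H := is_derive_mult (PSeries a) (fun t => sqrt (1 - t)) t _ _ (is_derive_PSeries a t (rad_a t Ht)) Hs Rmult_comm).
    assert (E : plus (mult (PSeries (PS_derive a) t) (sqrt (1 - t))) (mult (PSeries a t) (- / (2 * sqrt (1 - t)))) = zero).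
    { rewrite <- (A_id t Ht). unfold plus, mult, zero; simpl.
      apply Rabs_def2 in Ht. assert (0 < sqrt (1 - t)) by (apply sqrt_lt_R0; lra).
      assert (Hsq : sqrt (1 - t) * sqrt (1 - t) = 1 - t) by (apply sqrt_sqrt; lra).
      match goal with |- ?a = ?b => change (@eq R a b) end. set (s := sqrt (1 - t)) in *. rewrite <- Hsq. field. lra. }
    unfold plus, mult in E; simpl in E. unfold plus, mult in H; simpl in H. rewrite E in H. exact H. }
  intros Hy.
  assert (h0 : h 0 = 1). { unfold h. rewrite PSeries_0, Rminus_0_r, sqrt_1. simpl. ring. }
  change (h y = 1). rewrite <- h0.
  destruct (Rtotal_order y 0) as [Hlt|[Heq|Hgt]].
  - apply (eq_is_derive h y 0). intros t Ht. apply Hd. apply Rabs_def2 in Hy. apply Rabs_def1; lra. exact Hlt.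
  - rewrite Heq. reflexivity.
  - symmetry. apply (eq_is_derive h 0 y). intros t Ht. apply Hd. apply Rabs_def1; apply Rabs_def2 in Hy; lra. exact Hgt.
Qed.

Definition b (n : nat) : R := match n with O => 0 | S k => a (S k) / INR (S k) end.

Lemma b_abs n : Rabs (b n) <= 1.
Proof.
  destruct n. simpl. rewrite Rabs_R0; lra. change (b (S n)) with (a (S n) / INR (S n)).
  assert (H1 := a_pos (S n)). assert (H2 := a_le1 (S n)).
  assert (1 <= INR (S n)) by (apply (le_INR 1); lia).
  rewrite Rabs_pos_eq. 2: apply Rlt_le, Rdiv_lt_0_compat; lra.
  apply Rmult_le_reg_r with (INR (S n)). lra. unfold Rdiv. rewrite Rmult_assoc, Rinv_l by lra. lra.
Qed.

Lemma rad_b y : Rabs y < 1 -> Rbar_lt (Rabs y) (CV_radius b).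
Proof. apply radius_bounded, b_abs. Qed.

Lemma PSd_b n : PS_derive b n = a (S n).
Proof. unfold PS_derive. change (b (S n)) with (a (S n) / INR (S n)). field. apply not_0_INR. lia. Qed.

Lemma F_rel y : Rabs y < 1 -> y * PSeries (PS_derive b) y = PSeries a y - 1.
Proof.
  intros Hy.
  assert (Ha := rad_a y Hy).
  assert (Hd : Rbar_lt (Rabs y) (CV_radius (PS_derive b))) by (rewrite CV_radius_derive; apply rad_b; exact Hy).
  assert (L1 := is_lim_seq_scal_l _ y _ (ps_lim _ _ Hd)).
  assert (L2 := ps_lim _ _ Ha). apply is_lim_seq_incr_1 in L2.
  assert (L3 := is_lim_seq_minus' _ _ _ _ L2 (is_lim_seq_const 1)).
  apply is_lim_seq_unique in L1. apply is_lim_seq_unique in L3.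
  assert (E : Lim_seq (fun n => y * sum_n (fun k => PS_derive b k * y ^ k) n) =
              Lim_seq (fun n => sum_n (fun k => a k * y ^ k) (S n) - 1)).
  { apply Lim_seq_ext. intros n. induction n.
    - rewrite sum_n_SR', !sum_O, PSd_b. simpl. ring.
    - rewrite !(sum_n_SR' _ (S n)), sum_n_SR'. rewrite Rmult_plus_distr_l. rewrite sum_n_SR' in IHn. rewrite IHn.
      rewrite PSd_b. simpl pow. rewrite (sum_n_SR' (fun k => a k * y ^ k) n). match goal with |- ?a = ?b => change (@eq R a b) end. change (y ^ S n) with (y * y ^ n). ring. }
  simpl in L1. rewrite L1, L3 in E. injection E. auto.
Qed.

Definition fcl (y : R) : R := 4 * ln 2 - 2 * ln (2 + 2 * sqrt (1 - y)).

Lemma F_closed y : Rabs y < 1 -> PSeries b y = fcl y.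
Proof.
  set (g := fun y => PSeries b y - fcl y).
  assert (Hd : forall t, Rabs t < 1 -> is_derive g t zero).
  { intros t Ht.
    assert (Ht' := Rabs_def2 _ _ Ht).
    assert (Hs0 : 0 < sqrt (1 - t)) by (apply sqrt_lt_R0; lra).
    assert (Hsq : sqrt (1 - t) * sqrt (1 - t) = 1 - t) by (apply sqrt_sqrt; lra).
    assert (Hf : is_derive fcl t (/ (sqrt (1 - t) * (1 + sqrt (1 - t))))).
    { unfold fcl. auto_derive. replace (1 + - t) with (1 - t) by ring. repeat split; lra. replace (1 + - t) with (1 - t) by ring.
      match goal with |- ?a = ?b => change (@eq R a b) end. field. lra. }
    assert (H := @is_derive_minus R_AbsRing R_NormedModule _ _ t _ _ (is_derive_PSeries b t (rad_b t Ht)) Hf).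
    assert (E : PSeries (PS_derive b) t = / (sqrt (1 - t) * (1 + sqrt (1 - t)))).
    { destruct (Req_dec t 0) as [->|Hn0].
      - rewrite PSeries_0, PSd_b. simpl a. rewrite Rminus_0_r, sqrt_1. field.
      - assert (R1 := F_rel t Ht). assert (R2 := A_closed t Ht).
        apply Rmult_eq_reg_l with t. 2: exact Hn0. rewrite R1.
        set (s := sqrt (1 - t)) in *.
        assert (Es : PSeries a t = / s) by (apply Rmult_eq_reg_r with s; [rewrite R2; field|]; lra).
        rewrite Es. replace t with (1 - s * s) by lra. match goal with |- ?a = ?b => change (@eq R a b) end. field. lra. }
    unfold minus, plus, opp in H; simpl in H. rewrite E, Rplus_opp_r in H. exact H. }
  intros Hy.
  assert (g0 : g 0 = 0).
  { unfold g, fcl. rewrite PSeries_0, Rminus_0_r, sqrt_1. simpl b.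
    replace (2 + 2 * 1) with (2 * 2) by ring. rewrite ln_mult by lra. ring. }
  cut (g y = 0). unfold g; lra.
  rewrite <- g0.
  destruct (Rtotal_order y 0) as [Hlt|[Heq|Hgt]].
  - apply (eq_is_derive g y 0). intros t Ht. apply Hd. apply Rabs_def2 in Hy. apply Rabs_def1; lra. exact Hlt.
  - rewrite Heq. reflexivity.
  - symmetry. apply (eq_is_derive g 0 y). intros t Ht. apply Hd. apply Rabs_def2 in Hy. apply Rabs_def1; lra. exact Hgt.
Qed.


Lemma b_Sn n : b (S n) = a (S n) / INR (S n).
Proof. reflexivity. Qed.

Lemma b_nonneg n : 0 <= b n.
Proof.
  destruct n. simpl; lra. rewrite b_Sn. apply Rlt_le, Rdiv_lt_0_compat. apply a_pos. apply lt_0_INR; lia.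
Qed.

Lemma b_le n : b (S n) <= 2 * (a n - a (S n)).
Proof.
  rewrite b_Sn. assert (E : 2 * (a n - a (S n)) = a n / INR (S n)).
  { rewrite a_S, S_INR. assert (0 <= INR n) by apply pos_INR. field. lra. }
  rewrite E. unfold Rdiv. apply Rmult_le_compat_r. apply Rlt_le, Rinv_0_lt_compat, lt_0_INR; lia.
  apply a_decr.
Qed.

Lemma pw_le1 y n : 0 <= y <= 1 -> y ^ n <= 1.
Proof. intros H. induction n. simpl; lra. simpl. assert (0 <= y ^ n) by (apply pow_le; lra). nra. Qed.

Lemma tail_partial y N j : 0 <= y <= 1 ->
  0 <= sum_n (fun k => b k * y ^ k) (N + j) - sum_n (fun k => b k * y ^ k) N <= 2 * (a N - a (N + j)).
Proof.
  intros Hy. induction j.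
  - rewrite Nat.add_0_r. lra.
  - rewrite Nat.add_succ_r, sum_n_SR'.
    assert (H1 := b_nonneg (S (N + j))). assert (H2 := b_le (N + j)).
    assert (H3 : 0 <= y ^ S (N + j) <= 1) by (split; [apply pow_le; lra| apply pw_le1; lra]).
    assert (0 <= b (S (N + j)) * y ^ S (N + j) <= b (S (N + j))) by (split; nra).
    lra.
Qed.

Lemma tail_bound y N : 0 <= y < 1 ->
  0 <= PSeries b y - sum_n (fun k => b k * y ^ k) N <= 2 * a N.
Proof.
  intros Hy.
  assert (Hr : Rabs y < 1) by (rewrite Rabs_pos_eq; lra).
  assert (L := ps_lim b y (rad_b y Hr)).
  apply (is_lim_seq_incr_n _ N) in L.
  assert (T : forall j, 0 <= sum_n (fun k => b k * y ^ k) (j + N) - sum_n (fun k => b k * y ^ k) N <= 2 * a N).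
  { intros j. rewrite (Nat.add_comm j N). destruct (tail_partial y N j ltac:(lra)). assert (Hp := a_pos (N + j)). lra. }
  split.
  - assert (H := is_lim_seq_le (fun _ => sum_n (fun k => b k * y ^ k) N) (fun j => sum_n (fun k => b k * y ^ k) (j + N)) _ _
        (fun j => ltac:(destruct (T j); lra)) (is_lim_seq_const _) L).
    simpl in H. lra.
  - assert (H := is_lim_seq_le (fun j => sum_n (fun k => b k * y ^ k) (j + N)) (fun _ => sum_n (fun k => b k * y ^ k) N + 2 * a N) _ _
        (fun j => ltac:(destruct (T j); lra)) L (is_lim_seq_const _)).
    simpl in H. lra.
Qed.

Lemma a_lim : is_lim_seq a 0.
Proof.
  apply is_lim_seq_incr_1. apply is_lim_seq_spec. intros eps.
  assert (He := cond_pos eps).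
  assert (L := lim_inv_n). apply is_lim_seq_spec in L.
  destruct (L (mkposreal (eps * eps) ltac:(apply Rmult_lt_0_compat; lra))) as [N HN].
  exists N. intros n Hn. specialize (HN n Hn). simpl in HN.
  rewrite Rminus_0_r in *. rewrite Rabs_pos_eq in * by (try apply Rlt_le, Rinv_0_lt_compat; try apply Rlt_le, a_pos; generalize (pos_INR n); lra).
  assert (W := wallis_up n). rewrite S_INR in W.
  assert (HPI := PI_RGT_0). assert (HP3 := PI2_1). assert (0 <= INR n) by apply pos_INR.
  assert (Hp := a_pos (S n)).
  assert (a (S n) ^ 2 < eps * eps).
  { apply Rle_lt_trans with (/ (INR n + 1)); [|exact HN].
    apply Rmult_le_reg_l with (PI / 2). lra.
    apply Rle_trans with (1 / (2 * (INR n + 1))). exact W.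
    apply Rmult_le_reg_r with (2 * (INR n + 1)). lra.
    replace (1 / (2 * (INR n + 1)) * (2 * (INR n + 1))) with 1 by (field; lra).
    replace (PI / 2 * / (INR n + 1) * (2 * (INR n + 1))) with PI by (field; lra). lra. }
  nra.
Qed.


Definition Pn (N : nat) (x : R) : R := sum_n (fun k => b k * (sin x ^ 2) ^ k) N.

Lemma Pn_int N : is_RInt (Pn N) 0 (PI/2) (sum_n (fun k => b k * Ws (2 * k)) N).
Proof.
  assert (Hk : forall k, is_RInt (fun x => b k * (sin x ^ 2) ^ k) 0 (PI/2) (b k * Ws (2 * k))).
  { intros k. assert (H := is_RInt_scal _ _ _ (b k) _ (Ws_is (2 * k))).
    refine (is_RInt_ext _ _ _ _ _ _ H). intros x _. rewrite <- pow_mult. reflexivity. }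
  induction N.
  - unfold Pn. rewrite sum_O. refine (is_RInt_ext _ _ _ _ _ _ (Hk 0%nat)). intros x _. rewrite sum_O. reflexivity.
  - rewrite sum_n_SR'.
    assert (H := is_RInt_plus _ _ _ _ _ _ IHN (Hk (S N))).
    refine (is_RInt_ext _ _ _ _ _ _ H). intros x _. unfold Pn. rewrite sum_n_SR'. reflexivity.
Qed.

Lemma is_RInt_val (f : R -> R) a b l l' : is_RInt f a b l -> l = l' -> is_RInt f a b l'.
Proof. intros H <-. exact H. Qed.

Definition Gf (x : R) : R := 4 * ln 2 - 2 * ln (2 + 2 * cos x).

Lemma Gf_int : is_RInt Gf 0 (PI/2) (2 * PI * ln 2 - 2 * Vc).
Proof.
  assert (H1 := @is_RInt_const R_NormedModule 0 (PI/2) (4 * ln 2)).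
  assert (H2 := is_RInt_scal _ _ _ 2 _ (@RInt_correct R_CompleteNormedModule _ _ _ lncos_ex)).
  assert (H := is_RInt_minus _ _ _ _ _ _ H1 H2).
  apply (is_RInt_val _ _ _ _ (2 * PI * ln 2 - 2 * Vc)) in H.
  2: { unfold minus, plus, opp, scal; simpl. unfold mult; simpl. unfold Vc. field. }
  refine (is_RInt_ext _ _ _ _ _ _ H). intros x _. unfold Gf, minus, plus, opp, scal; simpl.
  unfold mult; simpl. ring.
Qed.

Lemma Gf_series x : 0 < x < PI/2 -> 0 <= sin x ^ 2 < 1 /\ Gf x = PSeries b (sin x ^ 2).
Proof.
  intros Hx.
  assert (Hc : 0 < cos x) by (apply cos_gt_0; lra).
  assert (Hs : sin x ^ 2 = 1 - cos x ^ 2) by (generalize (sin2_cos2 x); unfold Rsqr; simpl; lra).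
  assert (Hy : 0 <= sin x ^ 2 < 1) by (split; [apply pow2_ge_0 | nra]).
  split. exact Hy.
  rewrite F_closed by (rewrite Rabs_pos_eq; lra).
  unfold fcl, Gf.
  replace (1 - sin x ^ 2) with (cos x ^ 2) by lra. rewrite sqrt_pow2 by lra. reflexivity.
Qed.

Definition s1 (N : nat) : R := sum_n (fun k => b k * a k) N.

Lemma sumWs N : sum_n (fun k => b k * Ws (2 * k)) N = PI / 2 * s1 N.
Proof.
  unfold s1. induction N.
  - rewrite !sum_O, Ws_even. match goal with |- ?a = ?b => change (@eq R a b) end. ring.
  - rewrite !sum_n_SR', IHN, Ws_even. match goal with |- ?a = ?b => change (@eq R a b) end. ring.
Qed.

Lemma s1_bounds N : 0 <= (2 / PI) * (2 * PI * ln 2 - 2 * Vc) - s1 N <= 2 * a N.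
Proof.
  assert (HPI := PI_RGT_0).
  assert (HP := Pn_int N). rewrite sumWs in HP.
  assert (Hlow : PI / 2 * s1 N <= 2 * PI * ln 2 - 2 * Vc).
  { refine (is_RInt_le _ _ 0 (PI/2) _ _ _ HP Gf_int _). lra.
    intros x Hx. destruct (Gf_series x Hx) as [Hy E]. rewrite E.
    destruct (tail_bound (sin x ^ 2) N Hy). unfold Pn. lra. }
  assert (HC := @is_RInt_const R_NormedModule 0 (PI/2) (2 * a N)).
  assert (HPC := is_RInt_plus _ _ _ _ _ _ HP HC).
  assert (Hup : 2 * PI * ln 2 - 2 * Vc <= plus (PI / 2 * s1 N) (scal (PI / 2 - 0) (2 * a N))).
  { refine (is_RInt_le _ _ 0 (PI/2) _ _ _ Gf_int HPC _). lra.
    intros x Hx. destruct (Gf_series x Hx) as [Hy E]. rewrite E.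
    destruct (tail_bound (sin x ^ 2) N Hy). unfold Pn, plus; simpl in *. lra. }
  unfold plus, scal in Hup; simpl in Hup. unfold mult in Hup; simpl in Hup.
  split.
  - apply Rmult_le_reg_l with (PI / 2). lra. rewrite Rmult_0_r.
    replace (PI / 2 * (2 / PI * (2 * PI * ln 2 - 2 * Vc) - s1 N)) with ((2 * PI * ln 2 - 2 * Vc) - PI / 2 * s1 N) by (field; lra).
    lra.
  - apply Rmult_le_reg_l with (PI / 2). lra.
    replace (PI / 2 * (2 / PI * (2 * PI * ln 2 - 2 * Vc) - s1 N)) with ((2 * PI * ln 2 - 2 * Vc) - PI / 2 * s1 N) by (field; lra).
    lra.
Qed.

Lemma s1_lim : is_lim_seq s1 (4 * ln 2 - 8 * catalan / PI).
Proof.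
  assert (HPI := PI_RGT_0).
  replace (4 * ln 2 - 8 * catalan / PI) with ((2 / PI) * (2 * PI * ln 2 - 2 * Vc)).
  2: { rewrite catalan_val. field. lra. }
  apply is_lim_seq_le_le with (fun N => (2 / PI) * (2 * PI * ln 2 - 2 * Vc) - 2 * a N) (fun _ => (2 / PI) * (2 * PI * ln 2 - 2 * Vc)).
  - intros N. destruct (s1_bounds N). lra.
  - assert (H := is_lim_seq_minus' _ _ _ _ (is_lim_seq_const ((2 / PI) * (2 * PI * ln 2 - 2 * Vc)))
       (is_lim_seq_scal_l _ 2 _ a_lim)). simpl in H. rewrite Rmult_0_r, Rminus_0_r in H. exact H.
  - apply is_lim_seq_const.
Qed.


Lemma cbinom_eq n : cbinom n = INR (fact (2 * n)) / (INR (fact n)) ^ 2.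
Proof.
  unfold cbinom, Binomial.C. replace (2 * n - n)%nat with n by lia. replace (INR (fact n) ^ 2) with (INR (fact n) * INR (fact n)) by ring. reflexivity.
Qed.

Lemma cbinom_a n : cbinom n = 4 ^ n * a n.
Proof.
  induction n.
  - rewrite cbinom_eq. simpl. field.
  - rewrite cbinom_eq. replace (2 * S n)%nat with (S (S (2 * n))) by lia.
    rewrite !fact_simpl, !mult_INR.
    assert (E := cbinom_eq n). rewrite IHn in E.
    assert (Hf : 0 < INR (fact n)) by (apply lt_0_INR, lt_O_fact).
    assert (Hf2 : INR (fact (2 * n)) = 4 ^ n * a n * INR (fact n) ^ 2).
    { rewrite E. field. lra. }
    rewrite Hf2. rewrite a_S. rewrite !S_INR, mult_INR. simpl INR.
    assert (0 <= INR n) by apply pos_INR.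
    simpl pow. field. lra.
Qed.

Lemma term_eq n : (1/16) ^ n * (cbinom n) ^ 2 * H2 n / (INR n + 1) = a n ^ 2 * H2 n / (INR n + 1).
Proof.
  rewrite cbinom_a.
  assert (K : (1/16)^n * (4^n)^2 = 1).
  { rewrite <- pow_mult, Nat.mul_comm, pow_mult, <- Rpow_mult_distr. replace (1/16 * 4^2) with 1 by field. apply pow1. }
  set (u := (1/16)^n) in *. set (v := 4^n) in *. set (w := a n) in *.
  replace (u * (v * w) ^ 2) with (u * v ^ 2 * w ^ 2) by ring. rewrite K. field. generalize (pos_INR n); lra.
Qed.

Lemma H2_S n : H2 (S n) = H2 n + / (INR (S n)) ^ 2.
Proof. reflexivity. Qed.

Lemma partial_eq N : sum_n (fun n => (1/16) ^ n * (cbinom n) ^ 2 * H2 n / (INR n + 1)) N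
   = 4 * (INR (S N) * a (S N) ^ 2 * H2 (S N)) - 4 * s1 (S N).
Proof.
  unfold s1.
  induction N.
  - rewrite sum_O, term_eq, sum_n_SR', sum_O. simpl H2. rewrite b_Sn. simpl. field.
  - rewrite sum_n_SR', IHN, term_eq. rewrite (sum_n_SR' _ (S N)).
    rewrite (H2_S (S N)), (b_Sn (S N)), (a_S (S N)).
    rewrite !S_INR. assert (0 <= INR N) by apply pos_INR.
    match goal with |- ?a = ?b => change (@eq R a b) end.
    field. lra.
Qed.

Theorem mainTheorem7 :
  is_series (fun n : nat => (1/16)^n * (cbinom n)^2 * H2 n / (INR n + 1))
    (32 * catalan / PI + 2 * PI / 3 - 16 * ln 2).
Proof.
  change (is_lim_seq (sum_n (fun n : nat => (1/16)^n * (cbinom n)^2 * H2 n / (INR n + 1)))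
    (32 * catalan / PI + 2 * PI / 3 - 16 * ln 2)).
  assert (L1 := T_lim). apply is_lim_seq_incr_1 in L1.
  assert (L2 := s1_lim). apply is_lim_seq_incr_1 in L2.
  assert (L := is_lim_seq_minus' _ _ _ _ (is_lim_seq_scal_l _ 4 _ L1) (is_lim_seq_scal_l _ 4 _ L2)).
  simpl in L.
  apply (is_lim_seq_ext _ _ _ (fun N => eq_sym (partial_eq N))).
  replace (32 * catalan / PI + 2 * PI / 3 - 16 * ln 2) with (4 * (PI / 6) - 4 * (4 * ln 2 - 8 * catalan / PI)).
  exact L.
  field. generalize PI_RGT_0; lra.
Qed.
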